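(* Let $n,c,\sigma\ge1$ be integers, set $d=4\sigma$, let $p$ be a prime, and let $x\in\{0,\ldots,c\}^n$ have at most $\sigma$ nonzero coordinates. Let $\rho:\{1,\ldots,n\}\to\{1,\ldots,d\}$ be a uniformly random mapping and $r_1,\ldots,r_n$ independent uniform elements of $\{0,\ldots,p-1\}$, and define $\phi_j(x)=\big(\sum_{i:\rho(i)=j}x_ir_i\big)\bmod p$ for $j=1,\ldots,d$. Then the expected number of nonzero entries of $\phi(x)$ is at most $\tfrac d4$, and with probability at least $\tfrac12$ at least half of the entries of $\phi(x)$ are zero.
   Context: FSketch construction as described in the claim. *)

(* Defs.v *)
From mathcomp Require Import all_boot all_order all_algebra.
Set Implicit Arguments. Unset Strict Implicit. Unset Printing Implicit Defensive.
Import GRing.Theory Num.Theory.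

(* Sample space: a mapping rho : [n] -> [d] and a vector r in {0..p-1}^n. *)
Definition Omega (n d p : nat) : finType :=
  ({ffun 'I_n -> 'I_d} * {ffun 'I_n -> 'I_p})%type.

Definition phi (n d p : nat) (x : 'I_n -> nat) (w : Omega n d p) (j : 'I_d) : nat :=
  (\sum_(i < n | w.1 i == j) x i * w.2 i) %% p.

Definition nnz (n d p : nat) (x : 'I_n -> nat) (w : Omega n d p) : nat :=
  #|[set j : 'I_d | phi x w j != 0%N]|.

Definition nzeros (n d p : nat) (x : 'I_n -> nat) (w : Omega n d p) : nat :=
  #|[set j : 'I_d | phi x w j == 0%N]|.

Local Open Scope ring_scope.

Definition expect (T : finType) (X : T -> nat) : rat :=
  (\sum_(w : T) (X w)%:R) / #|T|%:R.

Definition prob (T : finType) (E : pred T) : rat :=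
  #|[set w : T | E w]|%:R / #|T|%:R.

(* Main.v *)
Require Import Defs.
From mathcomp Require Import all_boot all_order all_algebra zify.
Import Order.TTheory GRing.Theory Num.Theory.
Local Open Scope ring_scope.

Lemma nnz_le (n d p : nat) (x : 'I_n -> nat) (w : Omega n d p) :
  (nnz x w <= #|[set i | x i != 0%N]|)%N.
Proof.
rewrite /nnz; apply: leq_trans (leq_imset_card w.1 _).
apply/subset_leq_card/subsetP => j; rewrite inE /phi => Hj.
apply: contraR Hj => Hn.
rewrite big1 ?mod0n // => i /eqP Hi.
have : x i == 0%N.
  by apply: contraR Hn => Hx; apply/imsetP; exists i; rewrite ?inE.
by move/eqP ->.
Qed.

Theorem lemma7 (n c sigma p : nat) (x : 'I_n -> nat) :
  (1 <= n)%N -> (1 <= c)%N -> (1 <= sigma)%N -> prime p ->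
  (forall i, (x i <= c)%N) ->
  (#|[set i | x i != 0%N]| <= sigma)%N ->
  expect (nnz (d := 4 * sigma) (p := p) x) <= (4 * sigma)%:R / 4%:R /\
  prob (fun w : Omega n (4 * sigma) p => (2 * nzeros x w >= 4 * sigma)%N)
    >= 1 / 2%:R.
Proof.
move=> hn hc hs hp hx hS.
have Hnnz (w : Omega n (4 * sigma) p) : (nnz x w <= sigma)%N := leq_trans (@nnz_le _ _ _ x w) hS.
have hd : (0 < 4 * sigma)%N by rewrite muln_gt0.
have hp0 : (0 < p)%N by apply: prime_gt0.
set T := Omega n (4 * sigma) p.
have w0 : T := ([ffun _ => Ordinal hd], [ffun _ => Ordinal hp0]).
have hT : (0 < #|T|)%N by apply/card_gt0P; exists w0.
have hT' : (#|T|%:R : rat) != 0 by rewrite pnatr_eq0 -lt0n.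
split.
  rewrite /expect natrM [X in _ <= X / _]mulrC mulfK //.
  rewrite ler_pdivrMr ?ltr0n //.
  apply: le_trans (_ : \sum_(w : T) (sigma%:R : rat) <= _).
    by apply: ler_sum => w _; rewrite ler_nat.
  by rewrite sumr_const mulr_natr.
rewrite /prob.
have -> : [set w : T | (4 * sigma <= 2 * nzeros x w)%N] = setT.
  apply/setP => w; rewrite !inE.
  have Hc : (nzeros x w + nnz x w = 4 * sigma)%N.
    rewrite /nzeros /nnz addnC.
    have -> : [set j | phi x w j == 0%N] = ~: [set j | phi x w j != 0%N].
      by apply/setP => j; rewrite !inE negbK.
    by rewrite cardsC card_ord.
  move: (Hnnz w); lia.
rewrite cardsT divff // ler_pdivrMr ?ltr0n // mul1r ler1n //.
Qed.
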